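(* Let $(A,C,k)$ be an instance and $W$ an affordable committee. Then every CC-completion of $W$ has representation ratio at least $\frac34$.
   Context: An instance $(A,C,k)$ consists of a finite nonempty candidate set $C$, voters $N=\{1,\dots,n\}$, approval sets $A_i\subseteq C$, and a committee size $1\le k\le|C|$. A committee is $W\subseteq C$ with $|W|\le k$. $\mathrm{cov}(W)=|\{i: A_i\cap W\ne\emptyset\}|$; the representation ratio is $\mathrm{cov}(W)/\max\{\mathrm{cov}(W'):|W'|=k\}$. A CC-completion of $W$ is $W\cup T$ with $T\subseteq C\setminus W$, $|T|=k-|W|$, maximizing $\mathrm{cov}(W\cup T)$. $W$ is affordable if there are $p_i:C\to\mathbb{R}_{\ge0}$ ($i\in N$) with $p_i(c)=0$ for $c\notin A_i$, $\sum_c p_i(c)\le k/n$, $\sum_i p_i(c)=1$ for $c\in W$, $\sum_i p_i(c)=0$ for $c\notin W$. *)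

(* Defs.v *)
From mathcomp Require Import all_boot all_order all_algebra.
Set Implicit Arguments. Unset Strict Implicit. Unset Printing Implicit Defensive.
Import Order.TTheory GRing.Theory Num.Theory.

Definition cov (C : finType) (n : nat) (A : 'I_n -> {set C}) (W : {set C}) : nat :=
  #|[set i : 'I_n | [exists c in W, c \in A i]]|.

Definition opt_cov (C : finType) (n : nat) (A : 'I_n -> {set C}) (k : nat) : nat :=
  \max_(W' : {set C} | #|W'| == k) cov A W'.

(* W \cup T is a CC-completion of W *)
Definition is_CC_completion (C : finType) (n : nat) (A : 'I_n -> {set C}) (k : nat)
    (W T : {set C}) : Prop :=
  [/\ [disjoint T & W], #|T| = k - #|W| &
      forall T' : {set C}, [disjoint T' & W] -> #|T'| = k - #|W| ->
        cov A (W :|: T') <= cov A (W :|: T)]%N.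

Local Open Scope ring_scope.

Definition affordable (R : realFieldType) (C : finType) (n : nat)
    (A : 'I_n -> {set C}) (k : nat) (W : {set C}) : Prop :=
  exists p : 'I_n -> C -> R,
    [/\ forall i c, 0 <= p i c,
        forall i c, c \notin A i -> p i c = 0,
        forall i, \sum_(c : C) p i c <= k%:R / n%:R,
        forall c, c \in W -> \sum_(i < n) p i c = 1 &
        forall c, c \notin W -> \sum_(i < n) p i c = 0].

(* Main.v *)
Require Import Defs.
From mathcomp Require Import all_boot all_order all_algebra.
From mathcomp Require Import zify ring.
Set Implicit Arguments. Unset Strict Implicit. Unset Printing Implicit Defensive.

Lemma exists_sub (T : finType) (B : {set T}) m :
  m <= #|B| -> exists2 P : {set T}, P \subset B & #|P| = m.
Proof.
elim: m => [|m IH] H.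
  by exists set0; rewrite ?sub0set ?cards0.
have [P PB cP] := IH (ltnW H).
have : 0 < #|B :\: P| by rewrite cardsD (setIidPr PB) cP subn_gt0.
move=> /card_gt0P [x]; rewrite inE => /andP [xP xB].
exists (x |: P); first by rewrite subUset sub1set xB PB.
by rewrite cardsU1 xP cP.
Qed.

Lemma pad (T : finType) (W S : {set T}) s :
  [disjoint S & W] -> #|S| <= s -> #|W| + s <= #|T| ->
  exists T' : {set T}, [/\ S \subset T', [disjoint T' & W] & #|T'| = s].
Proof.
move=> dSW Ss Ws.
have : s - #|S| <= #|~: (W :|: S)|.
  have := cardsC (W :|: S); have := leq_card_setU W S; case => h _.
  lia.
move=> /exists_sub [P PB cP].
exists (S :|: P); split; first exact: subsetUl.
  rewrite -setI_eq0; apply/eqP/setP => x; rewrite !inE.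
  case xW: (x \in W); rewrite ?andbF ?andbT //.
  apply/negbTE/orP => -[xS|xP].
    by rewrite (disjointFr dSW xS) in xW.
  by move/subsetP: PB => /(_ x xP); rewrite !inE xW.
have dSP : [disjoint S & P].
  rewrite -setI_eq0; apply/eqP/setP => x; rewrite !inE.
  case xS: (x \in S) => //=; apply/negP => xP.
  by move/subsetP: PB => /(_ x xP); rewrite !inE xS orbT.
have := cardsUI S P. rewrite (disjoint_setI0 dSP) cards0 cP. lia.
Qed.

Lemma averaging (T : finType) (g : T -> nat) (D : {set T}) s :
  s <= #|D| -> exists2 S : {set T}, S \subset D &
     #|S| = s /\ s * \sum_(d in D) g d <= #|D| * \sum_(d in S) g d.
Proof.
move eN : #|D| => N; elim: N D eN => [|N IH] D eN sN.
  by exists D => //; split; lia.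
case: (ltnP s N.+1) => hs; last first.
  have -> : s = N.+1 by lia.
  by exists D => //; rewrite eN.
have : 0 < #|D| by rewrite eN.
move=> /card_gt0P [d0 d0D].
case: (arg_minnP g d0D) => m mD mmin.
have mD' : m \in D := mD.
have cD' : #|D :\ m| = N by move: eN; rewrite (cardsD1 m D) mD'; lia.
have [S SD [cS HS]] := IH _ cD' (ltnSE hs).
exists S; first by apply: (subset_trans SD); apply: subsetDl.
split => //.
rewrite (bigD1 m mD') /=.
have -> : \sum_(i in D | i != m) g i = \sum_(i in D :\ m) g i.
  by apply: eq_bigl => i; rewrite !inE andbC.
have Hm : N.+1 * g m <= g m + \sum_(i in D :\ m) g i.
  suff : \sum_(i in D :\ m) g m <= \sum_(i in D :\ m) g i.
    rewrite sum_nat_const cD'; lia.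
  apply: leq_sum => i; rewrite !inE => /andP [_ iD].
  exact: mmin.
set X := \sum_(i in D :\ m) g i in HS Hm *.
set Y := \sum_(i in S) g i in HS *.
case: N {IH cD' eN sN} hs HS Hm => [|N] hs HS Hm.
  have -> : s = 0 by lia. by [].
rewrite -(leq_pmul2l (ltn0Sn N)).
nia.
Qed.
Lemma arith (a GS c O G k w n : nat) :
  a + GS <= c -> O <= a + G -> (k - w) * G <= k * GS -> w * n <= a * k ->
  O <= n -> w <= k -> 1 <= k -> 3 * O <= 4 * c.
Proof.
move=> h1 h2 h3 h4 h5 h6 h7.
case: (leqP O a) => hOa; first by lia.
have [x ex] : exists x, O = a + x by exists (O - a); lia.
subst O.
have hx : x <= G by lia.
have e1 : (k - w) * x <= k * GS by apply: leq_trans h3; apply: leq_mul.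
have s1 : k * a + (k - w) * x <= k * c.
  apply: leq_trans (_ : k * (a + GS) <= _); last by apply: leq_mul.
  by rewrite mulnDr leq_add2l.
have s2 : (k * n - a * k) * x <= (k - w) * n * x.
  apply: leq_mul => //; rewrite mulnBl; lia.
have s3 : k * n * a + (k * n - a * k) * x <= k * n * c.
  have := leq_mul s1 (leqnn n).
  rewrite mulnDl [k * c * n]mulnAC => H; apply: leq_trans H.
  by rewrite [k * a * n]mulnAC [(k - w) * x * n]mulnAC leq_add2l.
have s4 : 4 * a * x <= n * (a + x).
  apply: leq_trans (_ : (a + x) * (a + x) <= _); last by apply: leq_mul.
  have [+ _] := nat_AGM2 a x. by rewrite mulnA expnS expn1.
have s5 : 4 * a * k * x <= k * n * (a + x).
  have := leq_mul s4 (leqnn k). have -> : 4 * a * x * k = 4 * a * k * x by ring. have -> : n * (a + x) * k = k * n * (a + x) by ring. done.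
have npos : 0 < n by lia.
have kn0 : 0 < k * n by rewrite muln_gt0 h7 npos.
rewrite -(leq_pmul2l kn0).
have s6 : a * k * x <= k * n * x.
  by apply: leq_mul => //; rewrite mulnC leq_mul2l; lia.
move: s3 s5 s6.
set P := k * n * c; set Q := k * n * a; set R := k * n * x; set S := a * k * x.
have -> : (k * n - a * k) * x = R - S by rewrite mulnBl.
have -> : 4 * a * k * x = 4 * S by rewrite /S !mulnA.
have -> : k * n * (3 * (a + x)) = 3 * (Q + R) by rewrite /Q /R; ring.
have -> : k * n * (4 * c) = 4 * P by rewrite /P; ring.
have -> : k * n * (a + x) = Q + R by rewrite /Q /R; ring.
lia.
Qed.

Lemma cov_mono (C : finType) n (A : 'I_n -> {set C}) (X Y : {set C}) :
  X \subset Y -> cov A X <= cov A Y.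
Proof.
move=> XY; apply: subset_leq_card; apply/subsetP => i; rewrite !inE.
move=> /existsP [c /andP [cX cA]]; apply/existsP; exists c.
by rewrite (subsetP XY c cX) cA.
Qed.

Lemma core_count (C : finType) n (A : 'I_n -> {set C}) (W D : {set C}) :
  let CW := [set i : 'I_n | [exists c in W, c \in A i]] in
  let pk := fun i => [pick d in D :&: A i] in
  let E := fun (S : {set C}) => [set i : 'I_n | (i \notin CW) &&
                    (if pk i is Some d then d \in S else false)] in
  [/\ forall S, #|E S| = \sum_(d in S) #|E [set d]|,
      forall S, #|CW| + #|E S| <= cov A (W :|: S) &
      forall Wo, Wo :\: W = D -> cov A Wo <= #|CW| + #|E D| ].
Proof.
move=> CW pk E; split.
- move=> S; rewrite -sum1_card big_mkcond /=.
  under [RHS]eq_bigr do rewrite -sum1_card big_mkcond /=.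
  rewrite exchange_big /=; apply: eq_bigr => i _.
  have Ei : forall S', (i \in E S') = (i \notin CW) &&
     (if pk i is Some d then d \in S' else false) by move=> S'; rewrite inE.
  rewrite Ei; under eq_bigr do rewrite Ei.
  case: (i \notin CW) => /=; last by rewrite big1.
  case: (pk i) => [d|]; last by rewrite big1.
  case dS: (d \in S).
    rewrite (bigD1 d) //= inE eqxx /= big1 ?addn0 // => d' /andP [_ ne].
    by rewrite !inE eq_sym (negbTE ne).
  rewrite big1 // => d' d'S; rewrite !inE; case: eqP => // ed.
  by rewrite ed d'S in dS.
- move=> S.
  have dis : CW :&: E S = set0.
    apply/setP => i; rewrite !inE; by case: ([exists c in W, c \in A i]).
  have := cardsUI CW (E S); rewrite dis cards0 addn0 => <-.
  apply: subset_leq_card; apply/subsetP => i; rewrite !inE => /orP [iW|].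
    move: iW => /existsP [c /andP [cW cA]]; apply/existsP; exists c.
    by rewrite inE cW cA.
  case/andP => _; rewrite /pk; case: pickP => [d|] //.
  rewrite inE => /andP [dD dA] dS; apply/existsP; exists d.
  by rewrite inE dS orbT dA.
- move=> Wo eD.
  apply: leq_trans (_ : #|CW :|: E D| <= _); last first.
    by case: (leq_card_setU CW (E D)).
  apply: subset_leq_card; apply/subsetP => i; rewrite !inE => /existsP [c /andP [cWo cA]].
  case iCW: [exists c0 in W, c0 \in A i] => //=.
  have cD : c \in D.
    rewrite -eD inE cWo andbT; apply/negP => cW.
    by move: iCW => /negbT/negP; apply; apply/existsP; exists c; rewrite cW cA.
  rewrite /pk; case: pickP => [d|H].
    by rewrite inE => /andP [].
  by have := H c; rewrite inE cD cA.
Qed.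
Definition CWset (C : finType) n (A : 'I_n -> {set C}) (W : {set C}) :=
  [set i : 'I_n | [exists c in W, c \in A i]].
Definition Eset (C : finType) n (A : 'I_n -> {set C}) (W D S : {set C}) :=
  [set i : 'I_n | (i \notin CWset A W) &&
     (if [pick d in D :&: A i] is Some d then d \in S else false)].

Lemma core_count' (C : finType) n (A : 'I_n -> {set C}) (W D : {set C}) :
  [/\ forall S, #|Eset A W D S| = \sum_(d in S) #|Eset A W D [set d]|,
      forall S, #|CWset A W| + #|Eset A W D S| <= cov A (W :|: S) &
      forall Wo, Wo :\: W = D -> cov A Wo <= #|CWset A W| + #|Eset A W D D| ].
Proof. exact: core_count. Qed.

Section Afford.
Import Order.TTheory GRing.Theory Num.Theory.
Local Open Scope ring_scope.

Lemma afford_bound (R : realFieldType) (C : finType) (n : nat)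
    (A : 'I_n -> {set C}) (k : nat) (W : {set C}) :
  (0 < n)%N -> affordable R A k W -> (#|W| * n <= cov A W * k)%N.
Proof.
move=> n0 [p [p0 pA psum pW _]].
set S := [set i : 'I_n | [exists c in W, c \in A i]].
have cS : cov A W = #|S| by [].
have n0R : (0 : R) < n%:R by rewrite ltr0n.
suff H : (#|W|%:R : R) <= #|S|%:R * (k%:R / n%:R).
  move: H; rewrite mulrA ler_pdivlMr // => H.
  by rewrite -(ler_nat R) cS !natrM.
have -> : (#|W|%:R : R) = \sum_(c in W) \sum_(i < n) p i c.
  rewrite -sumr_const; apply: eq_bigr => c cW; by rewrite pW.
rewrite exchange_big /= (bigID (fun i => i \in S)) /=.
rewrite [X in _ + X <= _]big1 ?addr0; last first.
  move=> i iS; apply: big1 => c cW; apply: pA; apply/negP => cA.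
  by move: iS; rewrite inE; case/negP; apply/existsP; exists c; rewrite cW.
rewrite mulr_natl -sumr_const; apply: ler_sum => i iS.
apply: le_trans (psum i).
rewrite [X in _ <= X](bigID (fun c => c \in W)) /= lerDl.
by apply: sumr_ge0 => c _; apply: p0.
Qed.
End Afford.

Theorem corollary3 (R : realFieldType) (C : finType) (n : nat)
    (A : 'I_n -> {set C}) (k : nat) (W T : {set C}) :
  (0 < n)%N -> (1 <= k)%N -> (k <= #|C|)%N ->
  (#|W| <= k)%N ->
  affordable R A k W ->
  is_CC_completion A k W T ->
  (3 * opt_cov A k <= 4 * cov A (W :|: T))%N.
Proof.
move=> n0 k1 kC wk aff CCT.
have hw := afford_bound n0 aff.
case: CCT => dTW cT Tmax.
have [Wo cWo ->] : exists2 Wo : {set C}, #|Wo| = k & opt_cov A k = cov A Wo.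
  have [P _ cP] : exists2 P : {set C}, P \subset [set: C] & #|P| = k.
    by apply: exists_sub; rewrite cardsT.
  have hp : 0 < #|[pred W' : {set C} | #|W'| == k]|.
    by apply/card_gt0P; exists P; rewrite inE /= cP.
  have [W0 W0k eW0] := eq_bigmax_cond (fun W' => cov A W') hp.
  exists W0; first by move: W0k; rewrite inE => /eqP.
  by rewrite /opt_cov -eW0.
set D := Wo :\: W.
have [Esum Ecov EDcov] := core_count' A W D.
set E := Eset A W D.
have hO := EDcov Wo erefl.
set s := k - #|W|.
have [S SD [cS HS]] := averaging (fun d => #|E [set d]|) (geq_minr s #|D|).
rewrite -!Esum in HS.
have dSW : [disjoint S & W].
  rewrite -setI_eq0; apply/eqP/setP => x; rewrite !inE.
  case xS: (x \in S) => //=; move/subsetP: SD => /(_ x xS).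
  by rewrite !inE => /andP [/negbTE].
have hS1 : #|S| <= s by rewrite cS geq_minl.
have hS2 : #|W| + s <= #|C| by rewrite /s; lia.
have [T' [ST' dT' cT']] := pad dSW hS1 hS2.
have h1 := Tmax T' dT' cT'.
have h2 : cov A (W :|: S) <= cov A (W :|: T') by apply: cov_mono; apply: setUS.
have hS := Ecov S.
have hD : #|D| <= k by rewrite -cWo; apply: subset_leq_card; apply: subsetDl.
have ea : cov A W = #|CWset A W| by [].
rewrite ea in hw.
have On : cov A Wo <= n by apply: leq_trans (max_card _) _; rewrite card_ord.
have h3 := leq_trans h2 h1.
case: (leqP s #|D|) => sD.
  rewrite (minn_idPl sD) in HS.
  apply: (arith (a := #|CWset A W|) (GS := #|Eset A W D S|) (G := #|Eset A W D D|) (w := #|W|) (n := n) (k := k) (c := cov A (W :|: T)) (O := cov A Wo)) => //.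
  - exact: leq_trans hS h3.
  - apply: leq_trans HS _; exact: leq_mul.
case: (posnP #|D|) => D0.
  have : #|Eset A W D D| = 0.
    by rewrite Esum; apply: big_pred0 => d; apply/negbTE; rewrite (card0_eq D0).
  lia.
have em : minn s #|D| = #|D| by apply/minn_idPr/ltnW.
move: HS; rewrite em leq_pmul2l // => HS.
lia.
Qed.
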